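(* Let $\beta\in\mathbb{C}$ be a root of $X^4+2$ and $K=\mathbb{Q}(\beta)$ with ring of integers $\mathcal{O}_K$. For every $d\in\mathbb{Z}$, every prime ideal of $\mathcal{O}_K$ dividing $d-\beta$ has residue degree $1$. *)

(* Defs.v *)
From HB Require Import structures.
From mathcomp Require Import all_boot all_order all_algebra all_field.
Set Implicit Arguments. Unset Strict Implicit. Unset Printing Implicit Defensive.
Import Order.TTheory GRing.Theory Num.Theory.
Local Open Scope ring_scope.

(* K = Q(beta) = Q[beta]  (beta is algebraic) *)
Definition inK (beta : algC) (x : algC) : Prop :=
  exists p : {poly rat}, x = (map_poly ratr p).[beta].

Definition inOK (beta : algC) (x : algC) : Prop := inK beta x /\ x \in Aint.

Definition is_ideal_OK (beta : algC) (I : algC -> Prop) : Prop :=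
  [/\ forall x, I x -> inOK beta x,
      I 0,
      forall x y, I x -> I y -> I (x + y)
    & forall a x, inOK beta a -> I x -> I (a * x)].

Definition is_prime_ideal_OK (beta : algC) (I : algC -> Prop) : Prop :=
  [/\ is_ideal_OK beta I,
      ~ I 1
    & forall a b, inOK beta a -> inOK beta b -> I (a * b) -> I a \/ I b].

(* O_K/P is spanned over its prime field F_p (image of Z) by f elements *)
Definition residue_spanned (beta : algC) (P : algC -> Prop) (f : nat) : Prop :=
  exists y : 'I_f -> algC, (forall i, inOK beta (y i)) /\
    forall x, inOK beta x ->
      exists c : 'I_f -> int, P (x - \sum_(i < f) (c i)%:~R * y i).

(* residue degree f = dim_{F_p} (O_K/P) = minimal size of a spanning family *)
Definition has_residue_degree (beta : algC) (P : algC -> Prop) (f : nat) : Prop :=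
  residue_spanned beta P f /\ forall g, residue_spanned beta P g -> (f <= g)%N.

(* Main.v *)
Require Import Defs.
From HB Require Import structures.
From mathcomp Require Import all_boot all_order all_algebra all_field.
From mathcomp Require Import ring lra zify.
Import GRing.Theory Num.Theory.
Local Open Scope ring_scope.

Lemma root4_Aint (w : algC) : w ^+ 4 = -2 -> w \in Aint.
Proof.
move=> hw; apply: (@root_monic_Aint ('X^4 + 2%:P)).
- by rewrite /root hornerD hornerXn hornerC hw addNr.
- by rewrite monicXnaddC.
- apply/polyOverP=> i; rewrite coefD coefXn coefC.
  by case: (i == 4)%N; case: (i == 0)%N; rewrite /= ?rpredD ?rpred1 ?rpred0 ?rpred_nat.
Qed.

Lemma nosqrt2 (t : algC) : t \in Crat -> t ^+ 2 = 2 -> False.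
Proof.
move=> tQ ht.
have tA : t \in Aint.
  apply: (@root_monic_Aint ('X^2 - 2%:P)).
  - by rewrite /root hornerD hornerN hornerXn hornerC ht subrr.
  - by rewrite monicXnsubC.
  - apply/polyOverP=> i; rewrite coefB coefXn coefC.
  by case: (i == 2)%N; case: (i == 0)%N; rewrite /= ?rpredB ?rpred1 ?rpred0 ?rpred_nat.
have /intrP[n hn] := Cint_rat_Aint tQ tA.
move: ht; rewrite hn -rmorphXn /= -[2 : algC]/((2%:Z)%:~R) => /intr_inj.
move=> h; have : (n * n = 2)%R by rewrite -expr2.
clear -h; move=> {h} h.
have [hl|hl] : (n <= 1 \/ 2 <= n)%R by lia.
- have [hm|hm] : (n <= -2 \/ -1 <= n)%R by lia.
  + have : (4 <= n * n)%R by nia. lia.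
  + have : (n = -1 \/ n = 0 \/ n = 1)%R by lia.
    by case=> [e|[e|e]]; rewrite e in h.
- have : (4 <= n * n)%R by nia. lia.
Qed.

Lemma L1 (b a c : algC) : b ^+ 4 = -2 -> a \in Crat -> c \in Crat ->
  a + c * b ^+ 2 = 0 -> a = 0 /\ c = 0.
Proof.
move=> hb aQ cQ h.
have [c0|cn0] := eqVneq c 0.
  by move: h; rewrite c0 mul0r addr0.
exfalso.
have ha : a = - (c * b ^+ 2) by apply/eqP; rewrite -addr_eq0 h.
have hu : b ^+ 2 = - a / c by apply: (mulIf cn0); rewrite /= divfK // ha; ring.
have uQ : b ^+ 2 \in Crat by rewrite hu rpredM ?rpredN ?rpredV.
have /CratP[t ht] := uQ.
have : ratr (t ^+ 2) = ratr (-2 : rat) :> algC.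
  by rewrite rmorphXn /= -ht -exprM hb rmorphN /= rmorph_nat.
move/fmorph_inj => h2.
have : (0 <= t ^+ 2 :> rat) by rewrite sqr_ge0.
rewrite h2; lra.
Qed.

Arguments L1 {b a c}.

Lemma LI (b s0 s1 s2 s3 : algC) : b ^+ 4 = -2 ->
  s0 \in Crat -> s1 \in Crat -> s2 \in Crat -> s3 \in Crat ->
  s0 + s1 * b + s2 * b ^+ 2 + s3 * b ^+ 3 = 0 ->
  [/\ s0 = 0, s1 = 0, s2 = 0 & s3 = 0].
Proof.
move=> hb s0Q s1Q s2Q s3Q h.
have [B0|Bn0] := eqVneq (s1 + s3 * b ^+ 2) 0.
  have [e1 e3] := L1 hb s1Q s3Q B0.
  have [e0 e2] : s0 = 0 /\ s2 = 0.
    by apply: (L1 hb s0Q s2Q); rewrite -h e1 e3; ring.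
  by split.
exfalso.
have Cn0 : s1 - s3 * b ^+ 2 != 0.
  apply/eqP => C0.
  have C0' : s1 + (- s3) * b ^+ 2 = 0 by rewrite -C0; ring.
  have s3Q' : - s3 \in Crat by rewrite rpredN.
  have [e1 e3] := L1 hb s1Q s3Q' C0'.
  by move: Bn0; rewrite e1 -(opprK s3) e3; apply/negP; rewrite negbK; apply/eqP; ring.
set D := s1 ^+ 2 + 2 * s3 ^+ 2.
have hD : D = (s1 + s3 * b ^+ 2) * (s1 - s3 * b ^+ 2) by rewrite /D; ring: hb.
have Dn0 : D != 0 by rewrite hD mulf_neq0.
have DQ : D \in Crat by rewrite /D rpredD ?rpredM ?rpredX ?rpred_nat.
set al := - (s0 * s1 + 2 * s2 * s3) / D.
set be := (s0 * s3 - s1 * s2) / D.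
have alQ : al \in Crat by rewrite /al rpredM ?rpredN ?rpredV ?rpredD ?rpredM ?rpred_nat.
have beQ : be \in Crat by rewrite /be rpredM ?rpredB ?rpredV ?rpredM.
have hbB : b * (s1 + s3 * b ^+ 2) = - (s0 + s2 * b ^+ 2).
  by apply/eqP; rewrite -addr_eq0 -h; apply/eqP; ring.
have hb2 : b = al + be * b ^+ 2.
  apply: (mulIf Dn0) => /=.
  rewrite /al /be /=.
  rewrite {1}hD mulrA hbB; field: hb; exact: Dn0.
clearbody al be.
have [e1 e2] : al ^+ 2 - 2 * be ^+ 2 = 0 /\ 2 * al * be - 1 = 0.
  apply: (L1 hb); rewrite ?rpredB ?rpredM ?rpredX ?rpred_nat ?rpred1 //.
  have hu : b ^+ 2 = (al + be * b ^+ 2) ^+ 2 by rewrite -hb2.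
  have -> : al ^+ 2 - 2 * be ^+ 2 + (2 * al * be - 1) * b ^+ 2 =
    (al + be * b ^+ 2) ^+ 2 - b ^+ 2 - be ^+ 2 * (b ^+ 4 + 2) by ring.
  by rewrite hb -hu addNr mulr0 subrr subr0.
have ben0 : be != 0 by apply/eqP=> be0; move: e2; rewrite be0 mulr0 sub0r; apply/eqP; rewrite oppr_eq0 oner_eq0.
apply: (@nosqrt2 (al / be)); first by rewrite rpredM ?rpredV.
apply: (mulIf (expf_neq0 2 ben0)) => /=.
rewrite expr_div_n divfK ?expf_neq0 //.
by apply/eqP; rewrite -subr_eq0 e1.
Qed.

Lemma parity (n : int) : ((n ^+ 4)%:~R / 2 : algC) \in Num.int ->
  (n%:~R / 2 : algC) \in Num.int.
Proof.
case/intrP=> m hm.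
have hnm : n ^+ 4 = 2 * m.
  suff : ((n ^+ 4)%:~R : algC) = ((2 * m)%:~R : algC) by move/intr_inj.
  rewrite [in RHS]intrM -hm.
  have -> : ((2:int)%:~R : algC) = 2 by [].
  by rewrite mulrC divfK // pnatr_eq0.
have hd := divz_eq n 2.
have h0 : (0 <= (n %% 2)%Z) by apply: modz_ge0.
have h1 : ((n %% 2)%Z < 2) by apply: ltz_pmod.
set q := (n %/ 2)%Z in hd. set r := (n %% 2)%Z in hd h0 h1.
have [r0|r1] : r = 0 \/ r = 1 by lia.
  rewrite hd r0 addr0 rmorphM /= mulfK ?pnatr_eq0 //; exact: intr_int.
exfalso.
rewrite hd r1 in hnm.
have : (q * 2 + 1) ^+ 4 = 2 * (8 * q^+4 + 16 * q^+3 + 12 * q^+2 + 4 * q) + 1 by ring.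
rewrite hnm; move: (8 * q^+4 + 16 * q^+3 + 12 * q^+2 + 4 * q) => K.
lia.
Qed.

Lemma half3 (b c : algC) : b ^+ 4 = -2 -> 2 * c \in Num.int ->
  c * b ^+ 3 \in Aint -> c \in Num.int.
Proof.
move=> hb /intrP[n hn] hA.
have hc : c = n%:~R / 2 by rewrite -hn mulrC mulKf // pnatr_eq0.
rewrite hc; apply: parity.
have e : (n ^+ 4)%:~R / 2 = - (c * b ^+ 3) ^+ 4 :> algC.
  have -> : (c * b ^+ 3) ^+ 4 = c ^+ 4 * (b ^+ 4) ^+ 3 by ring.
  by rewrite hb rmorphXn /= -hn; field.
rewrite e; apply: Cint_rat_Aint; last by rewrite rpredN rpredX.
by rewrite -e rpredM ?rpred_int ?rpredV ?rpred_nat.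
Qed.

Arguments half3 {b c}.

Ltac aint_close := repeat (first [assumption | apply: rpredB | apply: rpredD | apply: rpredM | apply: rpredX | rewrite rpredN]); done.

Lemma half (b t0 t1 t2 t3 : algC) : b ^+ 4 = -2 ->
  2 * t0 \in Num.int -> 2 * t1 \in Num.int -> 2 * t2 \in Num.int -> 2 * t3 \in Num.int ->
  t0 + t1 * b + t2 * b ^+ 2 + t3 * b ^+ 3 \in Aint ->
  [/\ t0 \in Num.int, t1 \in Num.int, t2 \in Num.int & t3 \in Num.int].
Proof.
move=> hb h0 h1 h2 h3 hy.
have bA : b \in Aint by apply: root4_Aint.
have A0 := Aint_Cint h0; have A1 := Aint_Cint h1.
have A2 := Aint_Cint h2; have A3 := Aint_Cint h3.
set y := t0 + t1 * b + t2 * b ^+ 2 + t3 * b ^+ 3 in hy.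
have i0 : t0 \in Num.int.
  apply: (half3 hb h0).
  have -> : t0 * b ^+ 3 = y * b ^+ 3 + 2 * t1 + 2 * t2 * b + 2 * t3 * b ^+ 2
     - (t1 + t2 * b + t3 * b ^+ 2) * (b ^+ 4 + 2) by rewrite /y; ring.
  rewrite hb addNr mulr0 subr0; aint_close.
have T0 := Aint_Cint i0.
have i1 : t1 \in Num.int.
  apply: (half3 hb h1).
  have -> : t1 * b ^+ 3 = (y - t0) * b ^+ 2 + 2 * t2 + 2 * t3 * b
     - (t2 + t3 * b) * (b ^+ 4 + 2) by rewrite /y; ring.
  rewrite hb addNr mulr0 subr0; aint_close.
have T1 := Aint_Cint i1.
have i2 : t2 \in Num.int.
  apply: (half3 hb h2).
  have -> : t2 * b ^+ 3 = (y - t0 - t1 * b) * b + 2 * t3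
     - t3 * (b ^+ 4 + 2) by rewrite /y; ring.
  rewrite hb addNr mulr0 subr0; aint_close.
have T2 := Aint_Cint i2.
have i3 : t3 \in Num.int.
  apply: (half3 hb h3).
  have -> : t3 * b ^+ 3 = y - t0 - t1 * b - t2 * b ^+ 2 by rewrite /y; ring.
  aint_close.
by split.
Qed.

Arguments half {b t0 t1 t2 t3}.

Local Notation pQ := (map_poly (ratr : rat -> algC)).

Definition f4 : {poly rat} := 'X^4 + 2%:P.

Lemma f4_neq0 : f4 != 0.
Proof. by rewrite -size_poly_eq0 /f4 size_XnaddC. Qed.

Lemma f4_eval (w : algC) : (pQ f4).[w] = w ^+ 4 + 2.
Proof. by rewrite /f4 rmorphD /= map_polyXn map_polyC hornerD hornerXn hornerC /= rmorph_nat. Qed.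

Lemma EXP (q : {poly rat}) (w : algC) : (size q <= 4)%N ->
  (pQ q).[w] = ratr q`_0 + ratr q`_1 * w + ratr q`_2 * w ^+ 2 + ratr q`_3 * w ^+ 3.
Proof.
move=> hq; rewrite (@horner_coef_wide _ 4) ?size_map_poly //.
rewrite !big_ord_recl big_ord0 !coef_map /=.
rewrite expr0 expr1 mulr1 addr0 !addrA.
done.
Qed.

Lemma REM (h : {poly rat}) (w : algC) :
  (pQ h).[w] = (pQ (h %/ f4)).[w] * (w ^+ 4 + 2) + (pQ (h %% f4)).[w].
Proof.
by rewrite {1}(divp_eq h f4) rmorphD rmorphM /= hornerD hornerM f4_eval.
Qed.

Lemma size_mod4 (h : {poly rat}) : (size (h %% f4)%R <= 4)%N.
Proof.
have := ltn_modp h f4; rewrite f4_neq0 /f4 size_XnaddC //; by [].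
Qed.

Arguments LI {b s0 s1 s2 s3}.

Lemma DIV (b : algC) (h : {poly rat}) : b ^+ 4 = -2 -> (pQ h).[b] = 0 ->
  forall w, w ^+ 4 = -2 -> (pQ h).[w] = 0.
Proof.
move=> hb hh w hw.
move: hh; rewrite (REM h b) hb addNr mulr0 add0r EXP ?size_mod4 // => hh.
rewrite (REM h w) hw addNr mulr0 add0r EXP ?size_mod4 //.
have [-> -> -> ->] := LI hb (Crat_rat _) (Crat_rat _) (Crat_rat _) (Crat_rat _) hh.
by rewrite !mul0r !addr0.
Qed.

Arguments DIV {b h}.

Lemma OKZ (b x : algC) : b ^+ 4 = -2 -> inOK b x ->
  exists c0 c1 c2 c3 : algC,
    [/\ c0 \in Num.int, c1 \in Num.int, c2 \in Num.int & c3 \in Num.int] /\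
    x = c0 + c1 * b + c2 * b ^+ 2 + c3 * b ^+ 3.
Proof.
move=> hb [[p ->] xA].
set x0 := (pQ p).[b] in xA *.
set r := (p %% f4)%R.
have hx : x0 = (pQ r).[b] by rewrite /x0 (REM p b) hb addNr mulr0 add0r.
have conjA : forall w, w ^+ 4 = -2 -> (pQ r).[w] \in Aint.
  move=> w hw.
  have [m0 [Dm _] _] := minCpolyP x0.
  apply: (@root_monic_Aint (minCpoly x0)); last exact: xA.
    rewrite /root Dm -horner_comp -map_comp_poly; apply/eqP; apply: (DIV hb _ w hw).
    by rewrite map_comp_poly horner_comp -hx -Dm; apply/eqP; apply: root_minCpoly.
  exact: minCpoly_monic.
have EV : forall w, (pQ r).[w] = ratr r`_0 + ratr r`_1 * w + ratr r`_2 * w ^+ 2 + ratr r`_3 * w ^+ 3.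
  by move=> w; rewrite EXP ?size_mod4.
set s0 := ratr r`_0 : algC. set s1 := ratr r`_1 : algC.
set s2 := ratr r`_2 : algC. set s3 := ratr r`_3 : algC.
have s0Q : s0 \in Crat by apply: Crat_rat.
have s1Q : s1 \in Crat by apply: Crat_rat.
have s2Q : s2 \in Crat by apply: Crat_rat.
have s3Q : s3 \in Crat by apply: Crat_rat.
have hi : 'i ^+ 2 = -1 :> algC by apply: sqrCi.
have hi4 : 'i ^+ 4 = 1 :> algC by rewrite -[4%N]/(2 * 2)%N exprM hi; ring.
have r1 : b ^+ 4 = -2 := hb.
have r2 : ('i * b) ^+ 4 = -2 by rewrite exprMn hi4 mul1r.
have r3 : (- b) ^+ 4 = -2 by rewrite -hb; ring.
have r4 : (- ('i * b)) ^+ 4 = -2 by rewrite -r2; ring.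
have z1 := conjA _ r1; have z2 := conjA _ r2.
have z3 := conjA _ r3; have z4 := conjA _ r4.
rewrite !EV -/s0 -/s1 -/s2 -/s3 in z1 z2 z3 z4.
have bA : b \in Aint by apply: root4_Aint.
have iA : ('i : algC) \in Aint.
  apply: (@root_monic_Aint ('X^2 + 1)).
  - by rewrite /root hornerD hornerXn hornerC hi addNr.
  - by rewrite -[1]/(1%:P) monicXnaddC.
  - apply/polyOverP=> i; rewrite coefD coefXn coefC.
    by case: (i == 2)%N; case: (i == 0)%N; rewrite /= ?rpredD ?rpred1 ?rpred0 ?rpred_nat.
set Z1 := s0 + s1 * b + s2 * b ^+ 2 + s3 * b ^+ 3 in z1 *.
set Z2 := s0 + s1 * ('i * b) + s2 * ('i * b) ^+ 2 + s3 * ('i * b) ^+ 3 in z2.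
set Z3 := s0 + s1 * - b + s2 * (- b) ^+ 2 + s3 * (- b) ^+ 3 in z3.
set Z4 := s0 + s1 * - ('i * b) + s2 * (- ('i * b)) ^+ 2 + s3 * (- ('i * b)) ^+ 3 in z4.
have T0 : 4 * s0 \in Num.int.
  apply: Cint_rat_Aint; first by rewrite rpredM ?rpred_nat.
  have -> : 4 * s0 = Z1 + Z2 + Z3 + Z4 by rewrite /Z1 /Z2 /Z3 /Z4; ring: hi.
  aint_close.
have T1 : -8 * s3 \in Num.int.
  apply: Cint_rat_Aint; first by rewrite rpredM ?rpredN ?rpred_nat.
  have -> : -8 * s3 = Z1 * b + Z2 * ('i * b) + Z3 * (- b) + Z4 * (- ('i * b))
    by rewrite /Z1 /Z2 /Z3 /Z4; ring: hi hb.
  aint_close.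
have T2 : -8 * s2 \in Num.int.
  apply: Cint_rat_Aint; first by rewrite rpredM ?rpredN ?rpred_nat.
  have -> : -8 * s2 = Z1 * b ^+ 2 + Z2 * ('i * b) ^+ 2 + Z3 * (- b) ^+ 2 + Z4 * (- ('i * b)) ^+ 2
    by rewrite /Z1 /Z2 /Z3 /Z4; ring: hi hb.
  aint_close.
have T3 : -8 * s1 \in Num.int.
  apply: Cint_rat_Aint; first by rewrite rpredM ?rpredN ?rpred_nat.
  have -> : -8 * s1 = Z1 * b ^+ 3 + Z2 * ('i * b) ^+ 3 + Z3 * (- b) ^+ 3 + Z4 * (- ('i * b)) ^+ 3
    by rewrite /Z1 /Z2 /Z3 /Z4; ring: hi hb.
  aint_close.
have e0 : 2 * (4 * s0) \in Num.int by rewrite rpredM ?rpred_nat.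
have e1 : 2 * (4 * s1) \in Num.int.
  have -> : 2 * (4 * s1) = - (-8 * s1) by ring.
  by rewrite rpredN; exact: T3.
have e2 : 2 * (4 * s2) \in Num.int.
  have -> : 2 * (4 * s2) = - (-8 * s2) by ring.
  by rewrite rpredN; exact: T2.
have e3 : 2 * (4 * s3) \in Num.int.
  have -> : 2 * (4 * s3) = - (-8 * s3) by ring.
  by rewrite rpredN; exact: T1.
have A4 : 4 * s0 + 4 * s1 * b + 4 * s2 * b ^+ 2 + 4 * s3 * b ^+ 3 \in Aint.
  have -> : 4 * s0 + 4 * s1 * b + 4 * s2 * b ^+ 2 + 4 * s3 * b ^+ 3 = 4 * Z1 by rewrite /Z1; ring.
  by rewrite rpredM ?rpred_nat.
have [f0 f1 f2 f3] := half hb e0 e1 e2 e3 A4.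
have g0 : 2 * (2 * s0) \in Num.int by have -> : 2 * (2 * s0) = 4 * s0 by ring.
have g1 : 2 * (2 * s1) \in Num.int by have -> : 2 * (2 * s1) = 4 * s1 by ring.
have g2 : 2 * (2 * s2) \in Num.int by have -> : 2 * (2 * s2) = 4 * s2 by ring.
have g3 : 2 * (2 * s3) \in Num.int by have -> : 2 * (2 * s3) = 4 * s3 by ring.
have A2 : 2 * s0 + 2 * s1 * b + 2 * s2 * b ^+ 2 + 2 * s3 * b ^+ 3 \in Aint.
  have -> : 2 * s0 + 2 * s1 * b + 2 * s2 * b ^+ 2 + 2 * s3 * b ^+ 3 = 2 * Z1 by rewrite /Z1; ring.
  by rewrite rpredM ?rpred_nat.
have [k0 k1 k2 k3] := half hb g0 g1 g2 g3 A2.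
have [l0 l1 l2 l3] := half hb k0 k1 k2 k3 z1.
exists s0, s1, s2, s3; split; first by split.
by rewrite hx EV.
Qed.

Arguments OKZ {b x}.

Lemma inOK_add b x y : inOK b x -> inOK b y -> inOK b (x + y).
Proof.
move=> [[p ->] hx] [[q ->] hy]; split; last exact: rpredD.
by exists (p + q); rewrite rmorphD hornerD.
Qed.

Lemma inOK_mul b x y : inOK b x -> inOK b y -> inOK b (x * y).
Proof.
move=> [[p ->] hx] [[q ->] hy]; split; last exact: rpredM.
by exists (p * q); rewrite rmorphM hornerM.
Qed.

Lemma inOK_int b (n : int) : inOK b n%:~R.
Proof.
split; last exact: Aint_int.
by exists (n%:~R%:P); rewrite map_polyC hornerC /= ratr_int.
Qed.

Lemma inOK_b b : b ^+ 4 = -2 -> inOK b b.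
Proof.
move=> hb; split; last exact: root4_Aint.
by exists 'X; rewrite map_polyX hornerX.
Qed.

Ltac ok_close hb := repeat (first [exact: (inOK_b _ hb) | exact: inOK_int | apply: inOK_add | apply: inOK_mul]).

Theorem proposition4 (beta : algC) (hbeta : beta ^+ 4 + 2 = 0) (d : int)
  (P : algC -> Prop) (hP : is_prime_ideal_OK beta P)
  (hdiv : P (d%:~R - beta)) :
  has_residue_degree beta P 1.
Proof.
have hb : beta ^+ 4 = -2 by apply/eqP; rewrite -addr_eq0; apply/eqP.
move: hP => [[hsub h0 hadd hmul] hn1 _].
have OK1 : inOK beta 1 by have := inOK_int beta 1.
split.
- exists (fun _ => 1); split; first by move=> i; exact: OK1.
  move=> x hx.
  have [c0 [c1 [c2 [c3 [[i0 i1 i2 i3] ->]]]]] := OKZ hb hx.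
  case/intrP: i0 => n0 ->; case/intrP: i1 => n1 ->.
  case/intrP: i2 => n2 ->; case/intrP: i3 => n3 ->.
  exists (fun _ => n0 + n1 * d + n2 * (d * d) + n3 * (d * d * d)).
  rewrite big_ord1 mulr1.
  have hbd : P (beta - d%:~R).
    have -> : beta - d%:~R = (-1)%:~R * (d%:~R - beta) by rewrite mulrN1z; ring.
    by apply: hmul => //; apply: inOK_int.
  have -> : n0%:~R + n1%:~R * beta + n2%:~R * beta ^+ 2 + n3%:~R * beta ^+ 3 -
      (n0 + n1 * d + n2 * (d * d) + n3 * (d * d * d))%:~R =
    (n1%:~R + n2%:~R * (beta + d%:~R) + n3%:~R * (beta * beta + beta * d%:~R + d%:~R * d%:~R))
      * (beta - d%:~R) :> algC.
    by rewrite !intrD !intrM; ring.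
  apply: hmul; last done. ok_close hb.
- move=> [|g] hs //; case: hs => y [hy hsp].
  have [c hc] := hsp 1 OK1.
  by move: hc; rewrite big_ord0 subr0.
Qed.
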